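(* Let $(X,d)$ be a separable metric space and $f:X\to X$ a Borel measurable map. If either $f$ has only countably many distinct stable classes, or $f$ is Lyapunov stable on its recurrent set $R(f)$, then $f$ has no $f$-invariant Borel probability measure that is an expansive measure of $f$.
   Context: The stable class of $p\in X$ is $W^s(p)=\{x\in X:\lim_{n\to\infty}d(f^n(x),f^n(p))=0\}$. The recurrent set is $R(f)=\{x\in X: x\in\omega_f(x)\}$, where $\omega_f(x)$ is the set of limits $\lim_{k\to\infty}f^{n_k}(x)$ over sequences $n_k\to\infty$. $f$ is Lyapunov stable on $A\subset X$ if for every $x\in A$ and $\epsilon>0$ there is a neighborhood $U(x)$ of $x$ with $d(f^n(x),f^n(y))<\epsilon$ for all $n\ge0$ and $y\in U(x)\cap A$. A Borel probability measure $\mu$ is an expansive measure of $f$ if there is $\delta>0$ with $\mu(\Phi_\delta(x))=0$ for all $x\in X$, where $\Phi_\delta(x)=\{y\in X: d(f^i(y),f^i(x))\le\delta \ \forall i\in\{0,1,2,\dots\}\}$; it is invariant if $\mu=\mu\circ f^{-1}$. *)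

(* Defs.v *)
From HB Require Import structures.
From mathcomp Require Import all_boot all_order all_algebra.
From mathcomp Require Import all_classical all_reals all_analysis.
Set Implicit Arguments. Unset Strict Implicit. Unset Printing Implicit Defensive.
Import Order.TTheory GRing.Theory Num.Theory.
Import numFieldNormedType.Exports.
Local Open Scope classical_set_scope.
Local Open Scope ring_scope.

Section Dyn.
Context {R : realType} {X : Type}.
Variable dist : X -> X -> R.

Definition is_metric : Prop :=
  (forall x y, 0 <= dist x y) /\
  (forall x y, dist x y = 0 <-> x = y) /\
  (forall x y, dist x y = dist y x) /\
  (forall x y z, dist x z <= dist x y + dist y z).

Definition dopen (U : set X) : Prop :=
  forall x, U x -> exists2 r : R, 0 < r & forall y, dist x y < r -> U y.

Definition separable : Prop :=
  exists D : set X, countable D /\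
    forall x (e : R), 0 < e -> exists2 y, D y & dist x y < e.

Definition borel_sets : set (set X) := <<s dopen >>.

Variable f : X -> X.

Definition stable_class (p : X) : set X :=
  [set x | (fun n => dist (iter n f x) (iter n f p)) @ \oo --> (0 : R)].

Definition omega_limit (x : X) : set X :=
  [set y | exists nk : nat -> nat,
     (forall N, exists K, forall k, (K <= k)%N -> (N <= nk k)%N) /\
     (fun k => dist (iter (nk k) f x) y) @ \oo --> (0 : R)].

Definition recurrent_set : set X := [set x | omega_limit x x].

Definition lyapunov_stable_on (A : set X) : Prop :=
  forall x, A x -> forall eps : R, 0 < eps ->
    exists U : set X, [/\ dopen U, U x &
      forall y, U y -> A y -> forall n, dist (iter n f x) (iter n f y) < eps].

Definition Phi (delta : R) (x : X) : set X :=
  [set y | forall i : nat, dist (iter i f y) (iter i f x) <= delta].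

Definition expansive_measure (mu : set X -> \bar R) : Prop :=
  exists2 delta : R, 0 < delta & forall x, mu (Phi delta x) = 0%E.

Definition invariant_measure (mu : set X -> \bar R) : Prop :=
  forall A, borel_sets A -> mu (f @^-1` A) = mu A.

End Dyn.

(* Main.v *)
Require Import Defs.
From mathcomp Require Import all_boot all_order all_algebra.
From mathcomp Require Import all_classical all_reals all_analysis.
From mathcomp Require Import lra.
Import Order.TTheory GRing.Theory Num.Theory.
Import numFieldNormedType.Exports.
Local Open Scope classical_set_scope.
Local Open Scope ring_scope.

Lemma countable_enum T (A : set T) : countable A ->
  A = set0 \/ exists g : nat -> T, A = range g.
Proof.
by move=> /pfcard_geP [->|/surjfunPex [g ->]]; [left|right; exists g].
Qed.

Section Main.
Context (R : realType) (d : measure_display) (X : measurableType d)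
  (dist : X -> X -> R) (Hmetric : is_metric dist)
  (Hborel : @measurable d X = borel_sets dist)
  (f : X -> X) (Hf : measurable_fun setT f)
  (P : probability X R) (Hinv : invariant_measure dist f P).

Lemma dist_ge0 x y : 0 <= dist x y. Proof. by case: Hmetric. Qed.
Lemma dist_xx x : dist x x = 0. Proof. by case: Hmetric => _ [/(_ x x) [_ ->]]. Qed.
Lemma distC x y : dist x y = dist y x. Proof. by case: Hmetric => _ [_ [->]]. Qed.
Lemma dist_tri x y z : dist x z <= dist x y + dist y z.
Proof. by case: Hmetric => _ [_ [_ ->]]. Qed.

Lemma dopen_meas U : dopen dist U -> measurable U.
Proof. by move=> hU; rewrite Hborel; exact: sub_sigma_algebra. Qed.

Lemma ball_open y r : dopen dist [set z | dist y z < r].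
Proof.
move=> x /= hx; exists (r - dist y x); first by rewrite subr_gt0.
move=> z hz; have := dist_tri y x z; lra.
Qed.

Lemma cball_meas c r : measurable [set z | dist z c <= r].
Proof.
rewrite -[X in measurable X]setCK; apply: measurableC; apply: dopen_meas.
move=> x /= /negP; rewrite -ltNge => hx; exists (dist x c - r).
  by rewrite subr_gt0.
move=> z hz /=; apply/negP; rewrite -ltNge; have := dist_tri x z c; lra.
Qed.

Lemma pre_meas A : measurable A -> measurable (f @^-1` A).
Proof. by move=> mA; have := Hf measurableT _ mA; rewrite setTI. Qed.

Lemma iter_pre n A : measurable A -> measurable (iter n f @^-1` A).
Proof.
elim: n A => [|n IH] A mA //.
have -> : iter n.+1 f @^-1` A = iter n f @^-1` (f @^-1` A) by [].
exact: (IH (f @^-1` A) (pre_meas _ mA)).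
Qed.

Lemma iter_inv n A : measurable A -> P (iter n f @^-1` A) = P A.
Proof.
elim: n A => [|n IH] A mA //.
have -> : iter n.+1 f @^-1` A = iter n f @^-1` (f @^-1` A) by [].
rewrite IH; last exact: pre_meas. apply: Hinv; by rewrite -Hborel.
Qed.

Lemma Phi_meas delta x : measurable (Phi dist f delta x).
Proof.
have -> : Phi dist f delta x =
    \bigcap_i (iter i f @^-1` [set z | dist z (iter i f x) <= delta]).
  apply/seteqP; split=> y /= hy i; first by move=> _; exact: hy.
  exact: (hy i I).
About bigcapT_measurable.
apply: bigcapT_measurable => i. exact: iter_pre (cball_meas _ _).
Qed.

Lemma neg_meas0 A : measurable A -> P A = 0%E -> P.-negligible A.
Proof. by move=> mA h; exists A; split. Qed.

Section Exp.
Variables (delta : R) (dpos : 0 < delta) (Hexp : forall x, P (Phi dist f delta x) = 0%E).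

Lemma stable_null p : P.-negligible (stable_class dist f p).
Proof.
apply: (@negligibleS _ _ _ _
  (\bigcup_N (iter N f @^-1` Phi dist f delta (iter N f p)))).
  move=> x /= /cvgrPdist_lt /(_ delta dpos) [N _ HN]; exists N => // i /=.
  rewrite -!iterD; have := HN (i + N)%N (leq_addl _ _).
  by rewrite sub0r normrN ger0_norm ?dist_ge0 // => /ltW.
apply: negligible_bigcup => N; apply: neg_meas0; first exact: iter_pre (Phi_meas _ _).
rewrite iter_inv; last exact: Phi_meas. exact: Hexp.
Qed.

End Exp.

Definition Aret (B : set X) := B `&` \bigcap_n ~` (iter n.+1 f @^-1` B).

Lemma Aret_meas B : measurable B -> measurable (Aret B).
Proof.
move=> mB; apply: measurableI => //; apply: bigcapT_measurable => n.
by apply: measurableC; exact: iter_pre.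
Qed.

Lemma Aret_disj B : trivIset setT (fun m => iter m f @^-1` Aret B).
Proof.
apply: ltn_trivIset => n m mn; apply/seteqP; split => // x /= [[_ hm] [hn _]].
have := hm (n - m.+1)%N I; rewrite /= -iterD.
apply; rewrite -iterS -addSn addSnnS subnK //.
Qed.

Lemma Aret_null B : measurable B -> P (Aret B) = 0%E.
Proof.
move=> mB.
have h n : (\sum_(i < n) P (Aret B) <= 1)%E.
  have := @measure_bigsetU _ _ _ P (fun i => iter i f @^-1` Aret B)
    (fun i => iter_pre i _ (Aret_meas _ mB)) (Aret_disj B) n.
  rewrite (eq_bigr (fun _ => P (Aret B))); last first.
    by move=> i _ /=; rewrite iter_inv //; exact: Aret_meas.
  move=> <-; apply: probability_le1.
  by apply: bigsetU_measurable => i _; exact: iter_pre (Aret_meas _ mB).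
have := measure_ge0 P (Aret B); have := h 1%N.
rewrite big_ord_recr big_ord0 /= add0e.
case: (P (Aret B)) h => [r| |] h //= _ r0.
congr (_%:E); apply/eqP; move: r0; rewrite lee_fin eq_le => ->; rewrite andbT.
rewrite leNgt; apply/negP => rpos.
have := h (Num.truncn r^-1).+1; rewrite sumEFin lee_fin sumr_const card_ord -mulr_natr.
have := truncnS_gt r^-1; have : r * r^-1 = 1 by rewrite divff // gt_eqF.
move: (Num.truncn r^-1).+1%:R => N; nra.
Qed.

Lemma recur_key B x N : B x -> (forall n, (N <= n)%N -> ~ B (iter n f x)) ->
  exists m, Aret B (iter m f x).
Proof.
elim: N => [|N IH] Bx H; first by case: (H 0%N (leq0n 0)).
case: (pselect (B (iter N f x))) => hN.
  exists N; split=> // k _; rewrite /= -iterS -iterD; apply: H.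
  by rewrite addSn ltnS leq_addl.
apply: IH => // n; rewrite leq_eqVlt => /orP [/eqP <- //|]; exact: H.
Qed.

Definition Bad B := \bigcup_m (iter m f @^-1` Aret B).

Lemma Bad_null B : measurable B -> P.-negligible (Bad B).
Proof.
move=> mB; apply: negligible_bigcup => m; apply: neg_meas0.
  exact: iter_pre (Aret_meas _ mB).
rewrite iter_inv; [exact: Aret_null | exact: Aret_meas].
Qed.

Lemma returns B x : B x -> ~ Bad B x -> forall N, exists n, (N <= n)%N /\ B (iter n f x).
Proof.
move=> Bx nb N; apply: contrapT => hn; apply: nb.
have [m hm] := recur_key B x N Bx (fun n hNn hB => hn (ex_intro _ n (conj hNn hB))).
by exists m.
Qed.

Section Enum.
Variables (e : nat -> X) (He : forall x eps, 0 < eps -> exists k, dist x (e k) < eps).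

Definition ball k n := [set z | dist (e k) z < n.+1%:R^-1].

Lemma ball_meas k n : measurable (ball k n).
Proof. exact: dopen_meas (ball_open _ _). Qed.

Lemma approx x r : 0 < r ->
  exists k n, ball k n x /\ (forall z, ball k n z -> dist x z < r).
Proof.
move=> r0; have r20 : 0 < r / 2 by rewrite divr_gt0.
have [N _ HN] := near_infty_natSinv_lt (PosNum r20).
have hN := HN N (leqnn N); rewrite /= in hN.
have [k hk] := He x (N.+1%:R^-1) (ltac:(by rewrite invr_gt0)).
exists k, N; split; first by rewrite /ball /= distC.
move=> z; rewrite /ball /= => hz; have := dist_tri x (e k) z; move: hN hk hz; move: (N.+1%:R^-1) => a; lra.
Qed.

Definition BadAll := \bigcup_k \bigcup_n Bad (ball k n).

Lemma BadAll_null : P.-negligible BadAll.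
Proof.
apply: negligible_bigcup => k; apply: negligible_bigcup => n.
exact: Bad_null (ball_meas k n).
Qed.

Lemma rec_of_notbad x : ~ BadAll x -> recurrent_set dist f x.
Proof.
move=> nb.
have hK K : exists m, (K <= m)%N /\ dist (iter m f x) x < K.+1%:R^-1.
  have [k [n [hx hb]]] := approx x (K.+1%:R^-1) (ltac:(by rewrite invr_gt0)).
  have nb' : ~ Bad (ball k n) x.
    by move=> hbad; apply: nb; exists k => //; exists n.
  have [m [Km hm]] := returns _ _ hx nb' K.
  by exists m; split=> //; rewrite distC; exact: hb.
have [nk Hnk] := choice hK.
exists nk; split.
  by move=> N; exists N => k Nk; exact: leq_trans Nk (Hnk k).1.
apply/cvgrPdist_lt => eps eps0.
near=> k; rewrite sub0r normrN ger0_norm ?dist_ge0 //.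
apply: lt_trans (Hnk k).2 _.
near: k; exact: near_infty_natSinv_lt (PosNum eps0).
Unshelve. all: by end_near.
Qed.

End Enum.

Lemma stable_self x : stable_class dist f x x.
Proof.
rewrite /stable_class /=.
have -> : (fun n => dist (iter n f x) (iter n f x)) = fun _ => 0.
  by apply: funext => n; rewrite dist_xx.
exact: cvg_cst.
Qed.

Lemma final (Hsep : separable dist)
  (Hcase : countable (range (stable_class dist f)) \/
           lyapunov_stable_on dist f (recurrent_set dist f)) :
  ~ expansive_measure dist f P.
Proof.
move=> [delta dpos Hexp].
suff: P.-negligible setT.
  move=> /(measure_negligible measurableT) h; have := probability_setT P; rewrite h => /eqP; rewrite eq_sym onee_eq0 //.
case: (pselect (exists x : X, True)) => [[x0 _]|hne]; last first.
  apply: (@negligibleS _ _ _ P set0); last exact: negligible_set0. move=> x _; apply: hne; by exists x.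
case: Hcase => [Hc|Hl].
  case: (countable_enum _ _ Hc) => [h0|[g hg]].
    have h : range (stable_class dist f) (stable_class dist f x0) by exists x0.
    by rewrite h0 in h.
  apply: (negligibleS (A := \bigcup_k g k)).
    move=> x _; have : range (stable_class dist f) (stable_class dist f x) by exists x.
    rewrite hg => -[k _ gk]; exists k => //; rewrite gk; exact: stable_self.
  apply: negligible_bigcup => k.
  have : range (stable_class dist f) (g k) by (rewrite hg; exists k).
  by case=> p _ <-; exact: (stable_null delta dpos Hexp p).
have [D [Dc Dd]] := Hsep.
case: (countable_enum _ _ Dc) => [D0|[e De]].
  by have [y] := Dd x0 1 ltr01; rewrite D0.
have He x eps : 0 < eps -> exists k, dist x (e k) < eps.
  move=> /(Dd x) [y]; rewrite De => -[j _ <-] h; by exists j.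
have hS : forall kn : nat * nat, exists S : set X, P.-negligible S /\
    forall x, recurrent_set dist f x ->
      ball e kn.1 kn.2 `&` recurrent_set dist f `<=` Phi dist f delta x ->
      ball e kn.1 kn.2 `&` recurrent_set dist f `<=` S.
  move=> kn.
  case: (pselect (exists x, recurrent_set dist f x /\
      ball e kn.1 kn.2 `&` recurrent_set dist f `<=` Phi dist f delta x))
    => [[x1 [_ h1]]|hn].
    exists (Phi dist f delta x1); split=> //.
    by apply: neg_meas0; [exact: Phi_meas|exact: Hexp].
  exists set0; split; first exact: negligible_set0.
  by move=> x rx hx; exfalso; apply: hn; exists x.
have [S HS] := choice hS.
apply: (negligibleS (A := BadAll e `|` \bigcup_k \bigcup_n S (k, n))).
  move=> x _; case: (pselect (BadAll e x)) => hb; [by left|right].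
  have rx := rec_of_notbad e He x hb.
  have [U [oU Ux hU]] := Hl x rx delta dpos.
  have [r r0 hr] := oU x Ux.
  have [k [n [hk hkn]]] := approx e He x r r0.
  exists k => //; exists n => //.
  apply: ((HS (k, n)).2 x rx) => //= z [bz rz] i.
  by rewrite distC; apply/ltW; apply: hU (hr _ (hkn _ bz)) rz i.
apply: negligibleU; first exact: (BadAll_null e).
apply: negligible_bigcup => k; apply: negligible_bigcup => n.
exact: (HS (k, n)).1.
Qed.

End Main.



Theorem corollary3p5 (R : realType) (d : measure_display) (X : measurableType d)
  (dist : X -> X -> R)
  (Hmetric : is_metric dist)
  (Hsep : separable dist)
  (Hborel : @measurable d X = borel_sets dist)
  (f : X -> X)
  (Hf : measurable_fun setT f)
  (Hcase : countable (range (stable_class dist f)) \/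
           lyapunov_stable_on dist f (recurrent_set dist f)) :
  forall P : probability X R,
    invariant_measure dist f P -> ~ expansive_measure dist f P.
Proof.
move=> P Hinv; exact: (@final R d X dist Hmetric Hborel f Hf P Hinv Hsep Hcase).
Qed.
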